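(* Every quasi-Polish space is a convergent approximation space.
   Context: A quasi-metric on a set $E$ is a map $d:E^2\to[0,+\infty)$ with $x=y\iff d(x,y)=d(y,x)=0$ and $d(x,z)\le d(x,y)+d(y,z)$; its topology is generated by the open balls $\{y: d(x,y)<r\}$. A sequence $(x_n)$ is Cauchy if $\lim_n\sup_{p\ge n}d(x_n,x_p)=0$; $(E,d)$ is complete if every Cauchy sequence converges for the metric $\hat d(x,y)=\max(d(x,y),d(y,x))$. A quasi-Polish space is a topological space with a countable basis whose topology is induced by a complete quasi-metric. Approximation relation: a binary relation $\ll$ on a topological basis $\mathcal{B}$ such that for all $U,V,T\in\mathcal{B}$: (1) $U\ll V\Rightarrow V\subseteq U$; (2) $U\subseteq T$ and $U\ll V$ imply $T\ll V$; (3) for every $x\in U$ there is $W\in\mathcal{B}$ with $x\in W$ and $U\ll W$; (4$^+$) every sequence $(U_i)_{i\in\mathbb{N}}$ in $\mathcal{B}$ with $U_i\ll U_{i+1}$ for all $i$ is a neighborhood basis of some point $x\in\bigcap_i U_i$. A convergent approximation space is a space admitting such a relation (conditions (1),(2),(3),(4$^+$)). *)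

(* Defs.v *)
From Stdlib Require Export Reals.
Open Scope R_scope.

Definition subset {X : Type} (A B : X -> Prop) : Prop := forall x, A x -> B x.

Definition is_topology {X : Type} (open : (X -> Prop) -> Prop) : Prop :=
  open (fun _ => True) /\
  (forall U V, open U -> open V -> open (fun x => U x /\ V x)) /\
  (forall (F : (X -> Prop) -> Prop), (forall U, F U -> open U) ->
     open (fun x => exists U, F U /\ U x)).

Definition is_basis {X : Type} (open : (X -> Prop) -> Prop)
  (B : (X -> Prop) -> Prop) : Prop :=
  (forall U, B U -> open U) /\
  (forall U x, open U -> U x -> exists W, B W /\ W x /\ subset W U).

Definition countable_family {X : Type} (B : (X -> Prop) -> Prop) : Prop :=
  exists f : (X -> Prop) -> nat,
    forall U V, B U -> B V -> f U = f V -> U = V.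

Definition second_countable {X : Type} (open : (X -> Prop) -> Prop) : Prop :=
  exists B, is_basis open B /\ countable_family B.

Definition is_quasi_metric {X : Type} (d : X -> X -> R) : Prop :=
  (forall x y, 0 <= d x y) /\
  (forall x y, x = y <-> (d x y = 0 /\ d y x = 0)) /\
  (forall x y z, d x z <= d x y + d y z).

Definition qball {X : Type} (d : X -> X -> R) (x : X) (r : R) : X -> Prop :=
  fun y => d x y < r.

Definition qm_open {X : Type} (d : X -> X -> R) (U : X -> Prop) : Prop :=
  forall x, U x -> exists z r, qball d z r x /\ subset (qball d z r) U.

Definition qm_cauchy {X : Type} (d : X -> X -> R) (u : nat -> X) : Prop :=
  forall eps, 0 < eps -> exists N, forall n p, (N <= n)%nat -> (n <= p)%nat ->
    d (u n) (u p) <= eps.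

Definition dhat_converges {X : Type} (d : X -> X -> R) (u : nat -> X) (l : X)
  : Prop :=
  forall eps, 0 < eps -> exists N, forall n, (N <= n)%nat ->
    Rmax (d (u n) l) (d l (u n)) < eps.

Definition qm_complete {X : Type} (d : X -> X -> R) : Prop :=
  forall u, qm_cauchy d u -> exists l, dhat_converges d u l.

Definition quasi_polish {X : Type} (open : (X -> Prop) -> Prop) : Prop :=
  second_countable open /\
  exists d : X -> X -> R, is_quasi_metric d /\ qm_complete d /\
    (forall U, open U <-> qm_open d U).

Definition nbhd_basis_seq {X : Type} (open : (X -> Prop) -> Prop)
  (U : nat -> X -> Prop) (x : X) : Prop :=
  (forall i, exists V, open V /\ V x /\ subset V (U i)) /\
  (forall V, open V -> V x -> exists i, subset (U i) V).

(* Approximation relation on a basis B satisfying (1),(2),(3),(4+). *)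
Definition convergent_approx_relation {X : Type} (open : (X -> Prop) -> Prop)
  (B : (X -> Prop) -> Prop) (ll : (X -> Prop) -> (X -> Prop) -> Prop) : Prop :=
  (forall U V, B U -> B V -> ll U V -> subset V U) /\
  (forall U V T, B U -> B V -> B T -> subset U T -> ll U V -> ll T V) /\
  (forall U x, B U -> U x -> exists W, B W /\ W x /\ ll U W) /\
  (forall Us : nat -> X -> Prop, (forall i, B (Us i)) ->
     (forall i, ll (Us i) (Us (S i))) ->
     exists x, (forall i, Us i x) /\ nbhd_basis_seq open Us x).

Definition convergent_approx_space {X : Type} (open : (X -> Prop) -> Prop)
  : Prop :=
  exists B ll, is_basis open B /\ convergent_approx_relation open B ll.

(* Main.v *)
Require Import Defs.
From Stdlib Require Import Reals Lra Lia Classical IndefiniteDescription FunctionalExtensionality PropExtensionality.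
Open Scope R_scope.

Section QM.
Variable X : Type.
Variable d : X -> X -> R.
Hypothesis Hqm : is_quasi_metric d.

Lemma d_nonneg : forall x y, 0 <= d x y.
Proof. destruct Hqm as [H _]; exact H. Qed.

Lemma d_refl : forall x, d x x = 0.
Proof. intro x. destruct Hqm as [_ [H _]]. apply (proj1 (H x x) eq_refl). Qed.

Lemma d_tri : forall x y z, d x z <= d x y + d y z.
Proof. destruct Hqm as [_ [_ H]]; exact H. Qed.

Lemma qm_ball_inside : forall U x, qm_open d U -> U x ->
  exists delta, 0 < delta /\ forall z, d x z < delta -> U z.
Proof.
  intros U x HU Ux. destruct (HU x Ux) as [z0 [r [Hx Hsub]]].
  unfold qball in Hx. exists (r - d z0 x). split; [lra|].
  intros z Hz. apply Hsub. unfold qball.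
  pose proof (d_tri z0 x z). lra.
Qed.

Lemma qm_ball_open : forall x r, qm_open d (qball d x r).
Proof. intros x r z Hz. exists x, r. split; [exact Hz| intros w Hw; exact Hw]. Qed.

End QM.

Theorem theorem3p6 (X : Type) (open : (X -> Prop) -> Prop)
  (Htop : is_topology open) (Hqp : quasi_polish open) :
  convergent_approx_space open.
Proof.
  destruct Hqp as [[B0 [[HB0o HB0b] [f Hf]]] [d [Hqm [Hcomp Hopen]]]].
  set (C := fun k z => exists W, B0 W /\ f W = k /\ W z).
  assert (HCo : forall k, open (C k)).
  { intro k. destruct Htop as [_ [_ Hu]].
    assert (Heq : C k = (fun x => exists U, (B0 U /\ f U = k) /\ U x)).
    { apply functional_extensionality; intro x; apply propositional_extensionality.
      unfold C; split; [intros [W [a [b c]]]; exists W; auto| intros [W [[a b] c]]; exists W; auto]. }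
    rewrite Heq. apply (Hu (fun W => B0 W /\ f W = k)). intros W [HW _]. apply HB0o; exact HW. }
  pose proof (d_nonneg X d Hqm) as Dnn.
  pose proof (d_refl X d Hqm) as Drf.
  pose proof (d_tri X d Hqm) as Dtr.
  assert (Hinside : forall U x, open U -> U x ->
     exists delta, 0 < delta /\ forall z, d x z < delta -> U z).
  { intros U x HU Ux. apply (qm_ball_inside X d Hqm); [apply Hopen; exact HU| exact Ux]. }
  assert (Hballo : forall x r, open (qball d x r)).
  { intros x r. apply Hopen. apply qm_ball_open. }
  exists (fun U => open U).
  exists (fun U V => exists y e, 0 < e /\ (forall z, V z -> d y z < e) /\
     (forall z, d y z < 2*e -> U z) /\
     ((forall z, V z -> d y z = 0) \/
      exists k, (forall z, V z -> C k z) /\ ~ (forall z, U z -> C k z) /\ e <= (1/2)^k)).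
  split.
  { split; [intros U HU; exact HU| intros U x HU Ux; exists U; split; [exact HU|split;[exact Ux|intros z Hz; exact Hz]]]. }
  split.
  {
    intros U V _ _ [y [e [He [HV [HU _]]]]] z Vz. apply HU. specialize (HV z Vz). lra. }
  split.
  {
    intros U V T _ _ _ HUT [y [e [He [HV [HU Hk]]]]].
    exists y, e. split; [exact He|]. split; [exact HV|]. split.
    - intros z Hz. apply HUT. apply HU. exact Hz.
    - destruct Hk as [Hp|[k [Hk1 [Hk2 Hk3]]]]; [left; exact Hp|right].
      exists k. split; [exact Hk1|]. split; [|exact Hk3].
      intro Hc. apply Hk2. intros z Hz. apply Hc. apply HUT. exact Hz. }
  split.
  {
    intros U x HU Ux.
    destruct (Hinside U x HU Ux) as [d2 [Hd2 Hd2U]].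
    destruct (classic (exists k, C k x /\ ~ (forall z, U z -> C k z))) as [[k [Ckx Hnk]]|Hno].
    - destruct (Hinside (C k) x (HCo k) Ckx) as [d1 [Hd1 Hd1C]].
      pose proof (pow_lt (1/2) k ltac:(lra)) as Hpk.
      set (eps := Rmin (Rmin d1 (d2/2)) ((1/2)^k)).
      assert (He1 : eps <= d1) by (unfold eps; pose proof (Rmin_l (Rmin d1 (d2/2)) ((1/2)^k)); pose proof (Rmin_l d1 (d2/2)); lra).
      assert (He2 : eps <= d2/2) by (unfold eps; pose proof (Rmin_l (Rmin d1 (d2/2)) ((1/2)^k)); pose proof (Rmin_r d1 (d2/2)); lra).
      assert (He3 : eps <= (1/2)^k) by (unfold eps; apply Rmin_r).
      assert (He0 : 0 < eps) by (unfold eps; repeat apply Rmin_pos; lra).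
      exists (qball d x eps). split; [apply Hballo|]. split.
      { unfold qball. rewrite Drf. exact He0. }
      exists x, eps. split; [exact He0|]. split.
      { intros z Hz. exact Hz. }
      split.
      { intros z Hz. apply Hd2U. lra. }
      right. exists k. split.
      { intros z Hz. apply Hd1C. unfold qball in Hz. lra. }
      split; [exact Hnk| exact He3].
    - assert (Hprin : forall z, U z -> d x z = 0).
      { intros z Uz. destruct (Rle_lt_or_eq_dec 0 (d x z) (Dnn x z)) as [Hlt|Heq]; [|auto].
        exfalso.
        destruct (HB0b (qball d x (d x z)) x (Hballo x (d x z))) as [W [BW [Wx Wsub]]].
        { unfold qball. rewrite Drf. exact Hlt. }
        assert (HCW : forall z, U z -> C (f W) z).
        { destruct (classic (forall z, U z -> C (f W) z)) as [H|H]; [exact H|].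
          exfalso. apply Hno. exists (f W). split; [|exact H].
          exists W. auto. }
        destruct (HCW z Uz) as [W' [BW' [Hf' W'z]]].
        assert (W' = W) by (apply Hf; auto).
        subst W'. specialize (Wsub z W'z). unfold qball in Wsub. lra. }
      exists U. split; [exact HU|]. split; [exact Ux|].
      exists x, (d2/2). split; [lra|]. split.
      { intros z Uz. rewrite (Hprin z Uz). lra. }
      split.
      { intros z Hz. apply Hd2U. lra. }
      left. exact Hprin. }
  intros Us HUso Hll.
  set (P := fun i (p : X * R) => let (y, e) := p in
     0 < e /\ (forall z, Us (S i) z -> d y z < e) /\
     (forall z, d y z < 2*e -> Us i z) /\
     ((forall z, Us (S i) z -> d y z = 0) \/
      exists k, (forall z, Us (S i) z -> C k z) /\ ~ (forall z, Us i z -> C k z) /\ e <= (1/2)^k)).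
  assert (Hw : forall i, {p : X * R | P i p}).
  { intro i. apply constructive_indefinite_description.
    destruct (Hll i) as [y [e H]]. exists (y, e). exact H. }
  set (Y := fun i => fst (proj1_sig (Hw i))).
  set (E := fun i => snd (proj1_sig (Hw i))).
  assert (HP : forall i, 0 < E i /\ (forall z, Us (S i) z -> d (Y i) z < E i) /\
     (forall z, d (Y i) z < 2*E i -> Us i z) /\
     ((forall z, Us (S i) z -> d (Y i) z = 0) \/
      exists k, (forall z, Us (S i) z -> C k z) /\ ~ (forall z, Us i z -> C k z) /\ E i <= (1/2)^k)).
  { intro i. unfold Y, E. destruct (Hw i) as [[y e] Hp]. simpl. exact Hp. }
  assert (Hstep : forall i z, Us (S i) z -> Us i z).
  { intros i z Hz. destruct (HP i) as [He [Ha [Hb _]]]. apply Hb. specialize (Ha z Hz). lra. }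
  assert (Hnest : forall i j, (i <= j)%nat -> forall z, Us j z -> Us i z).
  { intros i j Hij. induction Hij; intros z Hz; [exact Hz|]. apply IHHij. apply Hstep. exact Hz. }
  assert (HYin : forall i, Us i (Y i)).
  { intro i. destruct (HP i) as [He [_ [Hb _]]]. apply Hb. rewrite Drf. lra. }
  set (Hit := fun i k => (forall z, Us (S i) z -> C k z) /\ ~ (forall z, Us i z -> C k z)).
  assert (Hhit : forall i j k, Hit i k -> Hit j k -> i = j).
  { intros i j k [Hi1 Hi2] [Hj1 Hj2].
    destruct (Nat.lt_trichotomy i j) as [Hlt|[Heq|Hgt]]; [exfalso|exact Heq|exfalso].
    - apply Hj2. intros z Hz. apply Hi1. apply (Hnest (S i) j); [lia|exact Hz].
    - apply Hi2. intros z Hz. apply Hj1. apply (Hnest (S j) i); [lia|exact Hz]. }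
  assert (HM : forall M, exists N, forall i, (N <= i)%nat -> forall k, (k < M)%nat -> ~ Hit i k).
  { induction M as [|M IH].
    - exists 0%nat. intros i _ k Hk. lia.
    - destruct IH as [N HN].
      destruct (classic (exists i, Hit i M)) as [[i0 Hi0]|Hno].
      + exists (Nat.max N (S i0)). intros i Hi k Hk Hik.
        destruct (Nat.eq_dec k M) as [->|Hne].
        * pose proof (Hhit _ _ _ Hik Hi0). lia.
        * apply (HN i ltac:(lia) k ltac:(lia) Hik).
      + exists N. intros i Hi k Hk Hik.
        destruct (Nat.eq_dec k M) as [->|Hne].
        * apply Hno. exists i. exact Hik.
        * apply (HN i Hi k ltac:(lia) Hik). }
  assert (Hbound : forall eps, 0 < eps -> exists N, forall n, (N <= n)%nat ->
     forall w, Us (S n) w -> d (Y n) w <= eps).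
  { intros eps Heps.
    destruct (pow_lt_1_zero (1/2) ltac:(rewrite Rabs_right; lra) eps Heps) as [M HMp].
    destruct (HM M) as [N HN]. exists N. intros n Hn w Hw'.
    destruct (HP n) as [He [Ha [_ [Hpr|[k [Hk1 [Hk2 Hk3]]]]]]].
    - rewrite (Hpr w Hw'). lra.
    - assert (Hkm : (M <= k)%nat).
      { destruct (Compare_dec.le_lt_dec M k) as [H|H]; [exact H|].
        exfalso. apply (HN n Hn k H). split; assumption. }
      specialize (HMp k Hkm). rewrite Rabs_right in HMp by (apply Rle_ge; apply pow_le; lra).
      specialize (Ha w Hw'). lra. }
  assert (Hcauchy : qm_cauchy d Y).
  { intros eps Heps. destruct (Hbound eps Heps) as [N HN]. exists N.
    intros n p Hn Hnp. destruct (Nat.eq_dec n p) as [->|Hne].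
    - rewrite Drf. lra.
    - apply (HN n Hn). apply (Hnest (S n) p); [lia|]. apply HYin. }
  destruct (Hcomp Y Hcauchy) as [l Hl].
  exists l.
  assert (Hlin : forall i, Us i l).
  { intro i. destruct (HP i) as [He [Ha [Hb _]]]. apply Hb.
    destruct (Hl (E i) He) as [N HN].
    set (p := Nat.max N (S i)).
    assert (H1 : d (Y i) (Y p) < E i).
    { apply Ha. apply (Hnest (S i) p); [unfold p; lia|]. apply HYin. }
    specialize (HN p ltac:(unfold p; lia)).
    pose proof (Rmax_l (d (Y p) l) (d l (Y p))).
    pose proof (Dtr (Y i) (Y p) l). lra. }
  split; [exact Hlin|].
  split.
  { intro i. exists (Us i). split; [apply HUso|]. split; [apply Hlin| intros z Hz; exact Hz]. }
  intros V HV Vl.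
  destruct (proj1 (Hopen V) HV l Vl) as [z [r [Hzl Hsub]]].
  unfold qball in Hzl.
  set (delta := r - d z l).
  assert (Hdel : 0 < delta) by (unfold delta; lra).
  destruct (Hbound (delta/2) ltac:(lra)) as [N1 HN1].
  destruct (Hl (delta/2) ltac:(lra)) as [N2 HN2].
  set (n := Nat.max N1 N2).
  exists (S n). intros w Hw'.
  apply Hsub. unfold qball.
  specialize (HN1 n ltac:(unfold n; lia) w Hw').
  specialize (HN2 n ltac:(unfold n; lia)).
  pose proof (Rmax_r (d (Y n) l) (d l (Y n))).
  pose proof (Dtr z l w). pose proof (Dtr l (Y n) w).
  unfold delta in *. lra.
Qed.
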